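(* Let $N>0$, $d>0$ be real numbers with $0<N<1$ and $d^{2}>N^{-2}-1$. Let $F(z)=(1-Nz)^{2}\left(1-\frac{d^{2}}{z^{2}-1}\right)$, $\varphi(z)=\frac{1}{d^{2}}+\frac{1-N^{-1}z}{(z^{2}-1)^{2}}$ and $I_{2}=(1,\sqrt{1+d^{2}})$. Then the equation $\varphi(z)=0$ has exactly one root $z_{01}$ in $I_{2}$. Moreover, for real $A>0$, the equation $F(z)+A=0$ (i.e. the quartic equation $(1-Nz)^{2}(z^{2}-1-d^{2})+A(z^{2}-1)=0$ in the complex variable $z$) has four real roots when $0<A\leq -F(z_{01})$, and has two real and two (non-real) complex roots when $A>-F(z_{01})$.
   Context: This is the (dimensionless) dispersion relation for Kelvin–Helmholtz perturbations of two thin co-flowing layers (a pure incompressible fluid and a bubbly fluid): $z=ad/(u_{20}-c)$ with $c$ the phase velocity, $d=1/(bk)$, $N=M/d$ with $M=(u_{20}-u_{10})/a$, and $A=h_0\rho_{20}/((H_0-h_0)\rho_{10})>0$. The equation $F(z)+A=0$ is regarded as the fourth-degree polynomial equation obtained by multiplying by $z^{2}-1$; roots are counted with multiplicity. *)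

(* Defs.v *)
From HB Require Import structures.
From mathcomp Require Import all_boot all_order all_algebra.
From mathcomp Require Import complex.
Set Implicit Arguments. Unset Strict Implicit. Unset Printing Implicit Defensive.
Import Order.TTheory GRing.Theory Num.Theory.
Local Open Scope ring_scope.

Definition Ffun (R : rcfType) (N d z : R) : R :=
  (1 - N * z) ^+ 2 * (1 - d ^+ 2 / (z ^+ 2 - 1)).

Definition phifun (R : rcfType) (N d z : R) : R :=
  1 / d ^+ 2 + (1 - N^-1 * z) / (z ^+ 2 - 1) ^+ 2.

(* The quartic (1 - N z)^2 (z^2 - 1 - d^2) + A (z^2 - 1), i.e. F(z) + A = 0
   multiplied by z^2 - 1, as a real polynomial. *)
Definition quartic (R : rcfType) (N d A : R) : {poly R} :=
  (1 - N *: 'X) ^+ 2 * ('X ^+ 2 - (1 + d ^+ 2)%:P) + A *: ('X ^+ 2 - 1).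

Definition complexify (R : rcfType) (p : {poly R}) : {poly R[i]} :=
  map_poly (fun x : R => x%:C%C) p.

(* [p] (over C) has exactly [k] real roots, counted with multiplicity:
   the complete list [s] of complex roots of [p] (with multiplicity)
   contains exactly [k] elements with zero imaginary part. *)
Definition n_real_roots (R : rcfType) (p : {poly R[i]}) (k : nat) : Prop :=
  p != 0 /\
  exists s : seq R[i],
    p = lead_coef p *: \prod_(z <- s) ('X - z%:P) /\
    count (fun z : R[i] => complex.Im z == 0) s = k.

(* Main.v *)
Require Import Defs.
From HB Require Import structures.
From mathcomp Require Import all_boot all_order all_algebra.
From mathcomp Require Import complex.
From mathcomp Require Import ring lra.
Import Order.TTheory GRing.Theory Num.Theory.
Local Open Scope ring_scope.

Lemma ivt {R : rcfType} (p : {poly R}) a b : a < b ->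
  (p.[a] < 0 < p.[b]) \/ (p.[b] < 0 < p.[a]) -> exists x, (a < x < b) /\ root p x.
Proof.
move=> ab.
have key : forall p : {poly R}, p.[a] < 0 < p.[b] -> exists x, (a < x < b) /\ root p x.
  move=> p' /andP[pa pb].
  have [|x /andP[ax xb] rx] := @poly_ivt R p' a b (ltW ab).
    by rewrite (ltW pa) (ltW pb).
  exists x; split=> //; move/eqP: (rx) => px.
  have xa : x != a by apply/eqP=> E; move: pa; rewrite -E px ltxx.
  have xb' : x != b by apply/eqP=> E; move: pb; rewrite -E px ltxx.
  by rewrite !lt_neqAle ax xb eq_sym xa xb'.
case=> [h|/andP[pb pa]]; first exact: key.
have [|x [hx rx]] := key (- p).
  by rewrite !hornerN oppr_lt0 oppr_gt0 pa pb.
by exists x; split=> //; move: rx; rewrite rootN.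
Qed.

Lemma peel {R : rcfType} {p q : {poly R}} {rs x} :
  p = q * \prod_(r <- rs) ('X - r%:P) -> root p x -> x \notin rs ->
  exists q', (q = q' * ('X - x%:P)) /\ p = q' * \prod_(r <- x :: rs) ('X - r%:P).
Proof.
move=> Ep rx nx; move: rx; rewrite Ep rootM root_prod_XsubC (negbTE nx) orbF.
case/factor_theorem=> q' Eq; exists q'; split=> //.
by rewrite Eq big_cons mulrA.
Qed.

Lemma deriv_root {R : rcfType} (q : {poly R}) z :
  (q * ('X - z%:P))^`().[z] = q.[z].
Proof.
by rewrite derivM derivXsubC mulr1 hornerD hornerM hornerXsubC subrr mulr0 add0r.
Qed.

Lemma hornerQ {R : rcfType} (N d A x : R) :
  (quartic N d A).[x] = (1 - N*x)^+2 * (x^+2 - (1+d^+2)) + A*(x^+2-1).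
Proof. by rewrite /quartic !hornerE. Qed.

Lemma hornerQ' {R : rcfType} (N d A x : R) :
  (quartic N d A)^`().[x] =
   - (2 * N * (1 - N*x) * (x^+2 - (1+d^+2))) + 2 * x * (1 - N*x)^+2 + 2 * A * x.
Proof. set r := (X in _ = X). rewrite /quartic !derivE !hornerE /r. ring. Qed.

Lemma quarticE {R : rcfType} (N d A : R) : quartic N d A =
  Poly [:: -(1+d^+2) - A; 2*N*(1+d^+2); 1 - N^+2*(1+d^+2) + A; -(2*N); N^+2].
Proof.
rewrite /quartic /= !cons_poly_def mul0r add0r.
rewrite -!mul_polyC !(polyCD, polyCN, polyCM, rmorphXn, polyC1) /=.
ring.
Qed.

Lemma size_quartic {R : rcfType} (N d A : R) : N != 0 -> size (quartic N d A) = 5%N.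
Proof. by move=> N0; rewrite quarticE (PolyK (c:=0)) //= expf_neq0. Qed.

Lemma coef_quartic {R : rcfType} (N d A : R) i : (quartic N d A)`_i =
  [:: -(1+d^+2) - A; 2*N*(1+d^+2); 1 - N^+2*(1+d^+2) + A; -(2*N); N^+2]`_i.
Proof. by rewrite quarticE coef_Poly. Qed.

Lemma const_factor {R : rcfType} {N d A : R} {q rs} : N != 0 ->
  quartic N d A = q * \prod_(r <- rs) ('X - r%:P) -> size rs = 4%N ->
  q = (N^+2)%:P.
Proof.
move=> N0 EQ s4.
have P0 : \prod_(r <- rs) ('X - r%:P) != 0 by exact/monic_neq0/monic_prod_XsubC.
have q0 : q != 0.
  apply/eqP=> q0; move: (size_quartic _ d A N0); rewrite EQ q0 mul0r size_poly0.
  by [].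
have sq : size q = 1%N.
  move: (size_quartic _ d A N0); rewrite EQ size_mul // size_prod_XsubC s4.
  by rewrite addnS /= -[5%N]/(1+4)%N => /eqP; rewrite eqn_add2r => /eqP.
rewrite [q]size1_polyC ?sq //; congr (_%:P).
have := congr1 lead_coef EQ.
rewrite lead_coefM lead_coef_prod_XsubC mulr1 (lead_coefE q) sq /= => <-.
by rewrite lead_coefE size_quartic //= coef_quartic.
Qed.

Lemma vieta {R : rcfType} {N d A x1 x2 x3 x4 : R} :
  quartic N d A = (N^+2)%:P * \prod_(r <- [:: x1; x2; x3; x4]) ('X - r%:P) ->
  N^+2 * (x1 + x2 + x3 + x4) = 2 * N /\ N^+2 * (x1 * x2 * x3 * x4) = -(1+d^+2) - A.
Proof.
move=> EQ; split.
  have := congr1 (fun p : {poly R} => p`_3) EQ; rewrite /= coef_quartic coefCM.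
  have := @coefPn_prod_XsubC R [:: x1; x2; x3; x4] isT; rewrite /= => ->.
  rewrite !big_cons big_nil /= => E.
  have : N ^+ 2 * (x1 + (x2 + (x3 + (x4 + 0)))) = 2 * N by rewrite -[RHS]opprK E; ring.
  by rewrite addr0 !addrA.
have := congr1 (fun p : {poly R} => p.[0]) EQ; rewrite /= hornerQ hornerM hornerC horner_prod.
rewrite !big_cons big_nil !hornerXsubC => E.
rewrite (_ : -(1 + d^+2) - A = (1 - N * 0) ^+ 2 * (0 ^+ 2 - (1 + d ^+ 2)) + A * (0 ^+ 2 - 1)); last by ring.
by rewrite E; ring.
Qed.
Lemma complexify_count {R : rcfType} {Q q : {poly R}} {rs : seq R} :
  Q = q * \prod_(r <- rs) ('X - r%:P) -> q != 0 -> (forall x, ~~ root q x) ->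
  n_real_roots (complexify Q) (size rs).
Proof.
move=> EQ q0 qnr.
have cE : forall p : {poly R}, complexify p = map_poly (real_complex R) p by [].
have cQ : complexify Q = complexify q * \prod_(r <- rs) ('X - (real_complex R r)%:P).
  rewrite !cE EQ rmorphM rmorph_prod /=; congr (_ * _).
  by apply: eq_bigr => r _; rewrite map_polyXsubC.
have [s2 Hs2] := closed_field_poly_normal (complexify q).
have P0 : \prod_(r <- rs) ('X - (real_complex R r)%:P) != 0 :> {poly R[i]}.
  exact/monic_neq0/monic_prod_XsubC.
have cq0 : complexify q != 0 by rewrite cE map_poly_eq0.
split.
  by rewrite cQ mulf_neq0.
exists (s2 ++ map (real_complex R) rs); split.
  rewrite cQ lead_coefM lead_coef_prod_XsubC mulr1 {1}Hs2 big_cat /= big_map.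
  rewrite -scalerAl; reflexivity.
rewrite count_cat count_map.
rewrite (eq_in_count (a2 := pred0)); last first.
  move=> z zs /=; apply/negP => /eqP Iz.
  have rz : (complexify q).[z] = 0.
    rewrite Hs2 hornerZ.
    have : root (\prod_(z0 <- s2) ('X - z0%:P)) z by rewrite root_prod_XsubC.
    by move/eqP ->; rewrite mulr0.
  move: rz; case: z zs Iz => a b /= _ -> ra.
  have : real_complex R (q.[a]) = 0 :> R[i] by rewrite -horner_map.
  move/eqP; rewrite -(rmorph0 (real_complex R)) (inj_eq (@complexI _)) => /eqP qa.
  by move: (qnr a); rewrite /root qa eqxx.
rewrite count_pred0 add0n -[RHS](count_predT rs).
by apply: eq_count => r /=; rewrite eqxx.
Qed.
Definition hN {R : rcfType} (N d z : R) := N * (z^+2-1)^+2 + d^+2 * (N - z).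


Lemma hconv {R : rcfType} (N d u v : R) : 0 < N -> 1 <= u -> u <= v ->
  (v-1) * hN N d u <= (v-u) * hN N d 1 + (u-1) * hN N d v.
Proof.
move=> N0 u1 uv; rewrite -subr_ge0.
have -> : (v - u) * hN N d 1 + (u - 1) * hN N d v - (v - 1) * hN N d u =
  N * ((u-1)*(v-1)) * ((v-1)*(v+1)^+2 - (u-1)*(u+1)^+2) by rewrite /hN; ring.
apply: mulr_ge0; first by apply: mulr_ge0; [lra|nra].
rewrite subr_ge0; apply: ler_pM; [lra|exact: sqr_ge0|lra|].
nra.
Qed.

Lemma lin_root {R : rcfType} (p : {poly R}) : size p = 2%N -> exists y, root p y.
Proof.
move=> sp.
have p1 : p`_1 != 0.
  by have := lead_coef_eq0 p; rewrite lead_coefE sp /= => ->; rewrite -size_poly_eq0 sp.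
exists (- p`_0 / p`_1); rewrite /root horner_coef sp !big_ord_recr big_ord0 /=.
by rewrite expr0 expr1; apply/eqP; field.
Qed.

Lemma Qneg {R : rcfType} (N d A t : R) : 0 < N -> N < 1 -> 0 < d -> 0 < A ->
  -1 <= t -> t <= 1 -> (quartic N d A).[t] < 0.
Proof.
move=> N0 N1 d0 A0 t1 t2; rewrite hornerQ.
have t21 : t^+2 <= 1 by nra.
have h1 : 0 < 1 - N * t by nra.
have h2 : 0 < (1 - N*t)^+2 by exact: exprn_gt0.
have h3 : t^+2 - (1 + d^+2) < 0 by have := exprn_gt0 2 d0; lra.
have : (1 - N*t)^+2 * (t^+2 - (1 + d^+2)) < 0 by rewrite pmulr_rlt0.
have : A * (t^+2 - 1) <= 0 by rewrite pmulr_rle0 //; lra.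
lra.
Qed.

Lemma Qinj {R : rcfType} (N d A u v : R) : 0 < N -> 0 < d -> 0 < A ->
  1 < u -> u < v -> N * v < 1 ->
  (quartic N d A).[u] = 0 -> (quartic N d A).[v] = 0 -> False.
Proof.
move=> N0 d0 A0 u1 uv Nv; rewrite !hornerQ => Eu Ev.
have d2 : 0 < d^+2 by exact: exprn_gt0.
have u2 : 1 < u^+2 by nra.
have v2 : u^+2 < v^+2 by nra.
have Nuv : N * u < N * v by rewrite ltr_pM2l.
have Pu : (1 - N*v)^+2 < (1 - N*u)^+2 by nra.
have Pv : 0 < (1 - N*v)^+2 by apply: exprn_gt0; lra.
have Xu : 0 < 1 + d^+2 - v^+2.
  rewrite ltNge; apply/negP=> h.
  have : 0 <= (1 - N*v)^+2 * (v^+2 - (1 + d^+2)) by apply: mulr_ge0; [exact: sqr_ge0|lra].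
  have : 0 < A * (v^+2 - 1) by apply: mulr_gt0; lra.
  lra.
have X1 : 0 < (1 + d^+2 - v^+2) * (u^+2 - 1) by apply: mulr_gt0; lra.
have X2 : (1 + d^+2 - v^+2) * (u^+2 - 1) < (1 + d^+2 - u^+2) * (v^+2 - 1) by nra.
have := ltr_pM (ltW Pv) (ltW X1) Pu X2.
have -> : (1 - N * v) ^+ 2 * ((1 + d ^+ 2 - v ^+ 2) * (u ^+ 2 - 1)) = A * (v^+2-1) * (u^+2-1).
  have E : (1 - N*v)^+2 * (1 + d^+2 - v^+2) = A * (v^+2 - 1).
    by apply/eqP; rewrite eq_sym -subr_eq0 -Ev; apply/eqP; ring.
  by rewrite mulrA E.
have -> : (1 - N * u) ^+ 2 * ((1 + d ^+ 2 - u ^+ 2) * (v ^+ 2 - 1)) = A * (v^+2-1) * (u^+2-1).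
  have E : (1 - N*u)^+2 * (1 + d^+2 - u^+2) = A * (u^+2 - 1).
    by apply/eqP; rewrite eq_sym -subr_eq0 -Eu; apply/eqP; ring.
  by rewrite mulrA E; ring.
by rewrite ltxx.
Qed.

Lemma Qderiv_id {R : rcfType} (N d A z : R) :
  (z^+2-1) * (quartic N d A)^`().[z] = 2*z*(quartic N d A).[z] - 2*(1-N*z)*hN N d z.
Proof. by rewrite hornerQ' hornerQ /hN; ring. Qed.

Lemma Q_at {R : rcfType} (N d A z : R) : z^+2 - 1 != 0 ->
  (quartic N d A).[z] = (z^+2-1) * (A + Ffun N d z).
Proof. by move=> z0; rewrite hornerQ /Ffun; field; rewrite z0. Qed.

Lemma phi_eq {R : rcfType} (N d z : R) : z^+2 - 1 != 0 -> N != 0 -> d != 0 ->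
  phifun N d z = hN N d z / (N * d^+2 * (z^+2-1)^+2).
Proof. by move=> z0 N0 d0; rewrite /phifun /hN; field; rewrite z0 d0 N0. Qed.

Ltac notin := rewrite ?inE; repeat (apply/norP; split); apply/eqP=> ?; lra.


Lemma four_roots {R : rcfType} (N d A r1 r2 r3 r4 : R) : N != 0 ->
  r1 < r2 -> r2 < r3 -> r3 < r4 ->
  root (quartic N d A) r1 -> root (quartic N d A) r2 ->
  root (quartic N d A) r3 -> root (quartic N d A) r4 ->
  n_real_roots (complexify (quartic N d A)) 4.
Proof.
move=> Nn0 h12 h23 h34 rr1 rr2 rr3 rr4.
have cnz : (N^+2)%:P != 0 :> {poly R} by rewrite polyC_eq0 expf_neq0.
have cnr : forall x, ~~ root ((N^+2)%:P : {poly R}) x by move=> x; rewrite rootC expf_neq0.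
have E0 : quartic N d A = quartic N d A * \prod_(r <- [::]) ('X - r%:P) by rewrite big_nil mulr1.
have [q4 [_ E4]] := peel E0 rr4 ltac:(by []).
have [q3 [_ E3]] := peel E4 rr3 ltac:(notin).
have [q2 [_ E2]] := peel E3 rr2 ltac:(notin).
have [q1 [_ E1]] := peel E2 rr1 ltac:(notin).
have qE := const_factor Nn0 E1 erefl; subst q1; exact: (complexify_count E1 cnz cnr).
Qed.

Lemma double_root {R : rcfType} (N d A a b w : R) : N != 0 ->
  a < b -> b < w -> root (quartic N d A) a -> root (quartic N d A) b ->
  root (quartic N d A) w -> (quartic N d A)^`().[w] = 0 ->
  quartic N d A = (N^+2)%:P * \prod_(r <- [:: a; b; w; w]) ('X - r%:P).
Proof.
move=> Nn0 ab bw ra rb rwM dw.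
case/factor_theorem: rwM => q1 E1.
have q1w : root q1 w by rewrite /root -(deriv_root q1 w) -E1 dw.
case/factor_theorem: q1w => q2 E2.
have E3 : quartic N d A = q2 * \prod_(r <- [:: w; w]) ('X - r%:P).
  by rewrite E1 E2 !big_cons big_nil mulr1 mulrA.
have [q3 [_ E4]] := peel E3 rb ltac:(notin).
have [q4 [_ E5]] := peel E4 ra ltac:(notin).
by rewrite E5 (const_factor Nn0 E5).
Qed.

Lemma caseGT {R : rcfType} (N d K w M A a b r1 r2 : R) :
  0 < N -> N < 1 -> 0 < d -> N * K = 1 -> 1 < K ->
  a < -1 -> 1 < b -> b < K -> hN N d 1 < 0 -> hN N d K < 0 ->
  quartic N d M = (N^+2)%:P * \prod_(r <- [:: a; b; w; w]) ('X - r%:P) ->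
  M < A -> 0 < A -> r1 < -1 -> 1 < r2 -> r2 < K ->
  root (quartic N d A) r1 -> root (quartic N d A) r2 ->
  n_real_roots (complexify (quartic N d A)) 2.
Proof.
move=> N0 N1 d0 NK K1 a1 b1 b2 hN1 hNK EM MA A0 h12 h21 h22 rr1 rr2.
have Nn0 : N != 0 by rewrite gt_eqF.
have cnz : (N^+2)%:P != 0 :> {poly R} by rewrite polyC_eq0 expf_neq0.
have Qpos : forall t, b <= t -> 0 < (quartic N d A).[t].
  move=> t bt.
  have -> : (quartic N d A).[t] = (quartic N d M).[t] + (A - M) * (t^+2 - 1).
    by rewrite !hornerQ; ring.
  rewrite EM hornerM hornerC horner_prod !big_cons big_nil !hornerXsubC.
  have h1 : 0 <= N ^+ 2 * ((t - a) * ((t - b) * ((t - w) * ((t - w) * 1)))).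
    apply: mulr_ge0; first exact: sqr_ge0.
    rewrite mulr1 mulrA; apply: mulr_ge0; first by apply: mulr_ge0; lra.
    by rewrite -expr2 sqr_ge0.
  have h2 : 0 < (A - M) * (t ^+ 2 - 1) by apply: mulr_gt0; nra.
  lra.
have Nr2 : N * r2 < 1 by rewrite -NK ltr_pM2l.
have rQ2 := rr2.
case/factor_theorem: rr2 => q Eq.
have qr2 : q.[r2] != 0.
  rewrite -(deriv_root q r2) -Eq.
  have hr2 : hN N d r2 < 0.
    have := @hconv _ N d r2 K N0 (ltW h21) (ltW h22) => h.
    have : (K - r2) * hN N d 1 < 0 by rewrite pmulr_rlt0 //; lra.
    have : (r2 - 1) * hN N d K < 0 by rewrite pmulr_rlt0 //; lra.
    move=> h3 h4; have : (K - 1) * hN N d r2 < 0 by lra.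
    by rewrite pmulr_rlt0 //; lra.
  have := Qderiv_id N d A r2; move/eqP: rQ2 => ->; rewrite mulr0 sub0r => E.
  have : 0 < (r2^+2 - 1) * (quartic N d A)^`().[r2].
    by rewrite E oppr_gt0 pmulr_rlt0 //; apply: mulr_gt0 => //; lra.
  by apply: contraTneq => ->; rewrite mulr0 ltxx.
have qroots : forall t, root q t -> t < -1.
  move=> t rt.
  have Qt : (quartic N d A).[t] = 0 by rewrite Eq hornerM (rootP rt) mul0r.
  rewrite ltNge; apply/negP => t1.
  case: (lerP t 1) => t1'.
    by have := Qneg _ _ _ _ N0 N1 d0 A0 t1 t1'; rewrite Qt ltxx.
  case: (lerP b t) => tb.
    by have := Qpos t tb; rewrite Qt ltxx.
  have Nt : N * t < 1 by rewrite -NK ltr_pM2l //; lra.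
  case: (ltgtP t r2) => [tr|rt'|tE].
  - by apply: (Qinj _ _ _ _ _ N0 d0 A0 t1' tr Nr2 Qt); apply/eqP.
  - by apply: (Qinj _ _ _ _ _ N0 d0 A0 h21 rt' Nt _ Qt); apply/eqP.
  - by move: rt; rewrite tE /root (negbTE qr2).
have rq1 : root q r1.
  move: rr1; rewrite Eq rootM root_XsubC.
  have E12 : (r1 == r2) = false by apply/eqP; lra.
  by rewrite E12 orbF.
case/factor_theorem: rq1 => q1 Eq1.
have Q0 : quartic N d A != 0 by rewrite -size_poly_eq0 size_quartic.
have q1nr : forall x, ~~ root q1 x.
  move=> x; apply/negP => rx.
  have xq : root q x by rewrite Eq1 rootM rx.
  case/factor_theorem: rx => q2 Eq2.
  have EQ3 : quartic N d A = q2 * \prod_(r <- [:: x; r1; r2]) ('X - r%:P).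
    by rewrite Eq Eq1 Eq2 !big_cons big_nil mulr1 !mulrA.
  have sq2 : size q2 = 2%N.
    have q20 : q2 != 0 by apply: contraNneq Q0 => q20; rewrite EQ3 q20 mul0r.
    have P0 : \prod_(r <- [:: x; r1; r2]) ('X - r%:P) != 0.
      exact/monic_neq0/monic_prod_XsubC.
    move: (size_quartic _ d A Nn0); rewrite EQ3 size_mul // size_prod_XsubC /=.
    by rewrite addnS /= -[5%N]/(2+3)%N => /eqP; rewrite eqn_add2r => /eqP.
  have [y ry] := lin_root _ sq2.
  have yq : root q y by rewrite Eq1 Eq2 !rootM ry.
  case/factor_theorem: ry => q3 Eq3.
  have EQ4 : quartic N d A = q3 * \prod_(r <- [:: y; x; r1; r2]) ('X - r%:P).
    by rewrite EQ3 Eq3 [in RHS]big_cons mulrA.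
  have qE := const_factor Nn0 EQ4 erefl; subst q3.
  have [vs _] := vieta EQ4.
  have hx := qroots x xq; have hy := qroots y yq.
  set S := y + x + r1 + r2 in vs.
  have SK : S < K - 3 by rewrite /S; lra.
  have NS : N * S = 2.
    apply: (mulfI Nn0); rewrite mulrA -expr2 vs; ring.
  have : N * S < N * (K - 3) by rewrite ltr_pM2l.
  rewrite mulrBr NK NS; lra.
have q10 : q1 != 0.
  by apply: contraNneq Q0 => q10; rewrite Eq Eq1 q10 !mul0r.
have EQ : quartic N d A = q1 * \prod_(r <- [:: r1; r2]) ('X - r%:P).
  by rewrite Eq Eq1 !big_cons big_nil mulr1 mulrA.
exact: (complexify_count EQ q10 q1nr).
Qed.

Theorem proposition2 (R : rcfType) (N d : R) :
  0 < N -> N < 1 -> 0 < d -> d ^+ 2 > N ^-2 - 1 ->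
  exists z01 : R,
    [/\ 1 < z01 /\ z01 < Num.sqrt (1 + d ^+ 2),
        phifun N d z01 = 0,
        (forall z : R, 1 < z -> z < Num.sqrt (1 + d ^+ 2) ->
           phifun N d z = 0 -> z = z01) &
        forall A : R, 0 < A ->
          (A <= - Ffun N d z01 ->
             n_real_roots (complexify (quartic N d A)) 4) /\
          (- Ffun N d z01 < A ->
             n_real_roots (complexify (quartic N d A)) 2)].
Proof.
move=> N0 N1 d0 hd.
have Nn0 : N != 0 by rewrite gt_eqF.
have dn0 : d != 0 by rewrite gt_eqF.
have d2 : 0 < d^+2 by exact: exprn_gt0.
set K := N^-1.
have NK : N * K = 1 by rewrite /K mulfV.
have K1 : 1 < K by rewrite /K invf_gt1.
set s := Num.sqrt (1 + d^+2).
have s2 : s^+2 = 1 + d^+2 by rewrite /s sqr_sqrtr //; lra.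
have s0 : 0 < s by rewrite /s sqrtr_gt0; lra.
have Ks2 : K^+2 < s^+2 by rewrite s2 /K exprVn; lra.
have Ks : K < s by nra.
clearbody K s.
have Ns : 1 < N * s by rewrite -NK ltr_pM2l.
have hN1 : hN N d 1 < 0 by rewrite /hN expr1n subrr expr0n /= mulr0 add0r pmulr_rlt0 //; lra.
have hNs : 0 < hN N d s.
  have -> : hN N d s = d^+2 * s * (N * s - 1).
    by rewrite /hN (_ : d^+2 = s^+2 - 1); [ring | rewrite s2; ring].
  by apply: mulr_gt0; [apply: mulr_gt0|lra].
have hNK : hN N d K < 0.
  have NmK : N - K = N * (1 - K^+2) by rewrite mulrBr mulr1 expr2 mulrA NK mul1r.
  have -> : hN N d K = N * (K^+2 - 1) * (K^+2 - s^+2) by rewrite /hN NmK s2; ring.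
  rewrite pmulr_rlt0; last by apply: mulr_gt0; nra.
  lra.
have hpE : forall x, (N *: ('X ^+ 2 - 1)^+2 + d^+2 *: (N%:P - 'X)).[x] = hN N d x.
  by move=> x; rewrite !hornerE /hN expr2 mulrA.
have [w [/andP[w1 ws] rw]] : exists x, (1 < x < s) /\ root (N *: ('X ^+ 2 - 1)^+2 + d^+2 *: (N%:P - 'X)) x.
  by apply: ivt; [lra | left; rewrite !hpE hN1 hNs].
have hw : hN N d w = 0 by move/eqP: rw; rewrite hpE.
have Kw : K < w.
  rewrite ltNge; apply/negP=> wK.
  have := @hconv _ N d w K N0 (ltW w1) wK; rewrite hw mulr0 => h.
  have : (K - w) * hN N d 1 <= 0 by rewrite pmulr_rle0 ?hN1 //; nra.
  have : (w - 1) * hN N d K < 0 by rewrite pmulr_rlt0 //; lra.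
  lra.
have w21 : w^+2 - 1 != 0 by rewrite gt_eqF //; nra.
exists w; split.
- by split.
- by rewrite phi_eq // hw mul0r.
- move=> z z1 zs.
  have z21 : z^+2 - 1 != 0 by rewrite gt_eqF //; nra.
  have den : N * d^+2 * (z^+2-1)^+2 != 0 by rewrite !mulf_neq0 // ?expf_neq0.
  rewrite phi_eq //; move/eqP; rewrite mulf_eq0 invr_eq0 (negbTE den) orbF => /eqP hz.
  case: (ltgtP z w) => // [zw|wz].
    have := @hconv _ N d z w N0 (ltW z1) (ltW zw); rewrite hz hw !mulr0 => h.
    have : (w - z) * hN N d 1 < 0 by rewrite pmulr_rlt0 //; lra.
    lra.
  have := @hconv _ N d w z N0 (ltW w1) (ltW wz); rewrite hz hw !mulr0 => h.
  have : (z - w) * hN N d 1 < 0 by rewrite pmulr_rlt0 //; lra.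
  lra.
move=> A A0.
set M := - Ffun N d w.
have M0 : 0 < M.
  have X1 : 1 < d^+2 / (w^+2 - 1) by rewrite ltr_pdivlMr ?mul1r; nra.
  have P0 : 0 < (1 - N * w)^+2.
    have : 1 < N * w by rewrite -NK ltr_pM2l.
    move=> h; rewrite -sqrrN; apply: exprn_gt0; lra.
  rewrite /M /Ffun (_ : forall a b : R, - (a * (1 - b)) = a * (b - 1)); last by move=> a b; ring.
  by apply: mulr_gt0; lra.
have Qm1 : forall B, 0 < B -> (quartic N d B).[-1] < 0.
  by move=> B B0; apply: Qneg => //; lra.
have Q1 : forall B, 0 < B -> (quartic N d B).[1] < 0.
  by move=> B B0; apply: Qneg => //; lra.
have Qms : forall B, 0 < B -> 0 < (quartic N d B).[-s].
  move=> B B0; rewrite hornerQ sqrrN s2.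
  have -> : (1 - N * - s) ^+ 2 * (1 + d ^+ 2 - (1 + d ^+ 2)) + B * (1 + d ^+ 2 - 1) = B * d^+2 by ring.
  exact: mulr_gt0.
have Qs : forall B, 0 < B -> 0 < (quartic N d B).[s].
  move=> B B0; rewrite hornerQ s2.
  have -> : (1 - N * s) ^+ 2 * (1 + d ^+ 2 - (1 + d ^+ 2)) + B * (1 + d ^+ 2 - 1) = B * d^+2 by ring.
  exact: mulr_gt0.
have QK : forall B, 0 < B -> 0 < (quartic N d B).[K].
  move=> B B0; rewrite hornerQ NK subrr expr0n /= mul0r add0r.
  by apply: mulr_gt0 => //; nra.
have Qw : forall B, (quartic N d B).[w] = (w^+2 - 1) * (B - M).
  by move=> B; rewrite Q_at // /M; congr (_ * _); ring.
clearbody M.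
have w2 : 0 < w^+2 - 1 by nra.
have R1 : forall B, 0 < B -> exists r, (-s < r < -1) /\ root (quartic N d B) r.
  by move=> B B0; apply: ivt; [lra | right; rewrite (Qm1 B B0) (Qms B B0)].
have R2 : forall B, 0 < B -> exists r, (1 < r < K) /\ root (quartic N d B) r.
  by move=> B B0; apply: ivt; [lra | left; rewrite (Q1 B B0) (QK B B0)].
have cnz : (N^+2)%:P != 0 :> {poly R} by rewrite polyC_eq0 expf_neq0.
have cnr : forall x, ~~ root ((N^+2)%:P : {poly R}) x by move=> x; rewrite rootC expf_neq0.
have [a [b [/andP[a1 a2] [/andP[b1 b2] EM]]]] : exists a b, (-s < a < -1) /\ (1 < b < K) /\
    quartic N d M = (N^+2)%:P * \prod_(r <- [:: a; b; w; w]) ('X - r%:P).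
  have [a [/andP[a1 a2] ra]] := R1 M M0.
  have [b [/andP[b1 b2] rb]] := R2 M M0.
  have rwM : root (quartic N d M) w by rewrite /root Qw subrr mulr0.
  have dw : (quartic N d M)^`().[w] = 0.
    have := Qderiv_id N d M w; rewrite Qw subrr mulr0 mulr0 hw mulr0 subrr.
    by move/eqP; rewrite mulf_eq0 (negbTE w21) => /eqP.
  exists a, b; split; first by rewrite a1 a2.
  split; first by rewrite b1 b2.
  apply: double_root => //; lra.
have [r1 [/andP[h11 h12] rr1]] := R1 A A0.
have [r2 [/andP[h21 h22] rr2]] := R2 A A0.
split.
  move=> AM; case: (ltgtP A M) AM => // [AltM|->] _; last first.
    exact: (complexify_count EM cnz cnr).
  have Qwn : (quartic N d A).[w] < 0 by rewrite Qw pmulr_rlt0 //; lra.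
  have [r3 [/andP[h31 h32] rr3]] : exists x, (K < x < w) /\ root (quartic N d A) x.
    by apply: ivt; [lra | right; rewrite Qwn (QK A A0)].
  have [r4 [/andP[h41 h42] rr4]] : exists x, (w < x < s) /\ root (quartic N d A) x.
    by apply: ivt; [lra | left; rewrite Qwn (Qs A A0)].
  apply: (@four_roots _ N d A r1 r2 r3 r4 Nn0 _ _ _ rr1 rr2 rr3 rr4); lra.
move=> MA; apply: (@caseGT _ N d K w M A a b r1 r2 N0 N1 d0 NK K1 a2 b1 b2 hN1 hNK EM MA A0 h12 h21 h22 rr1 rr2).
Qed.
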